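(* Let $D,n,r\ge 1$. For $0\le i<n$, let $X_{i}$ be the $(D+1)\times(D+1)$ matrix, with rows and columns indexed by $\{0,\dots,D\}$, whose $(k,\ell)$ entry is the commuting variable $x_{i,\ell}$ if $k+1=\ell$ and $0$ otherwise. Let $\mathcal{H}\subseteq\mathbb{F}^{\{x_{i,j}:0\le i<n,\,1\le j\le D\}}$ be a nonempty set of assignments to the commuting variables $x_{i,j}$ such that for every $1\le\ell\le D$, $\mathcal{H}$ is a hitting set for all polynomials computed by set-multilinear ABPs of width $\le r(D+1)$ and depth $\ell$ with respect to the variable partition $\bigsqcup_{j=1}^{\ell}\{x_{i,j}\}_{0\le i<n}$ (viewed as polynomials in all variables $x_{i,j}$). Let $\mathcal{H}'\subseteq(\mathbb{F}^{(D+1)\times(D+1)})^n$ be obtained by replacing each point $h\in\mathcal{H}$ by the tuple $(X_0(h),\dots,X_{n-1}(h))$ of the matrices $X_i$ with the variables evaluated at $h$. Then for every non-commutative polynomial $f\in\mathbb{F}\{x_0,\dots,x_{n-1}\}$ computed by a non-commutative ABP of width $\le r$ and depth $D$: $f$ is zero iff $f(A)$ is the zero matrix for every $A\in\mathcal{H}'$.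
   Context: $\mathbb{F}\{x_0,\dots,x_{n-1}\}$ denotes the ring of polynomials in non-commuting variables over $\mathbb{F}$. A (non-commutative) ABP of depth $D$ is a directed acyclic graph with vertices partitioned into layers $0,\dots,D$, a single source in layer $0$, a single sink in layer $D$, edges only from layer $i-1$ to layer $i$, each labeled by an affine linear form; it computes the sum over source-to-sink paths of the products of labels in path order; its width is the maximum number of vertices in a layer. A set-multilinear ABP of depth $\ell$ with respect to a partition $Y_1\sqcup\dots\sqcup Y_\ell$ is an ABP of depth $\ell$ in which every edge from layer $j-1$ to layer $j$ is labeled by a homogeneous linear form in $Y_j$. A set $\mathcal{H}$ is a hitting set for a class of polynomials if each polynomial in the class is zero iff it vanishes on all points of $\mathcal{H}$. Scalars $a\in\mathbb{F}$ act on matrices as $a\mathrm{I}$. *)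

(* Defs.v *)
From HB Require Import structures.
From mathcomp Require Import all_boot all_order all_algebra.
Set Implicit Arguments. Unset Strict Implicit. Unset Printing Implicit Defensive.
Import Order.TTheory GRing.Theory Num.Theory.
Local Open Scope ring_scope.

(* An ABP of depth L and width <= W is encoded with every
   layer having vertex set 'I_W (missing vertices / edges = label 0);
   the source is vertex 0 of layer 0 and the sink is vertex 0 of layer L.
   A source-to-sink path is a map p : 'I_L.+1 -> 'I_W with p 0 = 0 and
   p L = 0; its k-th edge (k < L) goes from p k (layer k) to p (k+1). *)
Definition good_path (L W : nat) (p : {ffun 'I_L.+1 -> 'I_W}) : bool :=
  (nat_of_ord (p ord0) == 0%N) && (nat_of_ord (p ord_max) == 0%N).

Definition src_of (L : nat) (k : 'I_L) : 'I_L.+1 := widen_ord (leqnSn L) k.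
Definition tgt_of (L : nat) (k : 'I_L) : 'I_L.+1 := lift ord0 k.

(* Non-commutative side.  A non-commutative polynomial in F{x_0..x_{n-1}}
   is given by its coefficient function on words (seq 'I_n).
   An affine linear form is (constant term, coefficient of x_i). *)
Record ncABP (F : Type) (n D r : nat) := NcABP {
  nc_label : 'I_D -> 'I_r -> 'I_r -> (F * ('I_n -> F))%type }.

Fixpoint ncprod_coef (F : ringType) (n : nat) (ls : seq (F * ('I_n -> F)))
    (w : seq 'I_n) : F :=
  match ls with
  | [::] => if w is [::] then 1 else 0
  | l :: ls' => l.1 * ncprod_coef ls' w +
               (if w is i :: w' then l.2 i * ncprod_coef ls' w' else 0)
  end.

Definition nc_coef (F : ringType) (n D r : nat) (P : ncABP F n D r)
    (w : seq 'I_n) : F :=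
  \sum_(p : {ffun 'I_D.+1 -> 'I_r} | good_path p)
     ncprod_coef [seq nc_label P k (p (src_of k)) (p (tgt_of k)) | k <- enum 'I_D] w.

Definition nc_eval (F : comRingType) (n d m : nat) (f : seq 'I_n -> F)
    (A : 'I_n -> 'M[F]_m.+1) : 'M[F]_m.+1 :=
  \sum_(k < d.+1) \sum_(t : k.-tuple 'I_n) f t *: \prod_(j < k) A (tnth t j).

(* The matrix X_i (rows/columns indexed by 0..D) evaluated at an assignment
   h of the commuting variables x_{i,j}, 0 <= i < n, 1 <= j <= D; the
   variable x_{i,j} is h (i, j') with j' : 'I_D, j = j' + 1. *)
Definition Xmat (F : ringType) (n D : nat) (h : 'I_n * 'I_D -> F) (i : 'I_n)
    : 'M[F]_D.+1 :=
  \matrix_(k < D.+1, l < D.+1)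
    (if @insub _ (fun x : nat => (x < D)%N) 'I_D (nat_of_ord k) is Some j
     then (if nat_of_ord l == (nat_of_ord k).+1 then h (i, j) else 0)
     else 0).

(* Commutative side.  Variables x_{i,j} indexed by ('I_n * 'I_D)
   ((i, j') stands for x_{i, j'+1}).  A commutative polynomial is given by
   its coefficient function on exponent vectors (monomials). *)
Record smlABP (F : Type) (n D l W : nat) := SmlABP {
  sml_label : 'I_l -> 'I_W -> 'I_W -> ('I_n * 'I_D -> F) }.

(* set-multilinear w.r.t. Y_1 ⊔ ... ⊔ Y_l, Y_j = {x_{i,j}}_i: every edge
   from layer k to layer k+1 (k < l) is a homogeneous linear form in
   Y_{k+1} (i.e. only variables (i, j') with j' = k occur). *)
Definition is_setml (F : ringType) (n D l W : nat) (B : smlABP F n D l W) : Prop :=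
  forall (k : 'I_l) (u v : 'I_W) (x : 'I_n * 'I_D),
    nat_of_ord x.2 != nat_of_ord k -> sml_label B k u v x = 0.

(* coefficient of the monomial with exponent vector e in the commutative
   product of the linear forms ls 0, ..., ls (L-1) *)
Definition linprod_coef (F : ringType) (V : finType) (L : nat)
    (ls : 'I_L -> V -> F) (e : V -> nat) : F :=
  \sum_(t : {ffun 'I_L -> V} | [forall v, e v == #|[pred k | t k == v]|])
     \prod_(k < L) ls k (t k).

Definition sml_coef (F : ringType) (n D l W : nat) (B : smlABP F n D l W)
    (e : 'I_n * 'I_D -> nat) : F :=
  \sum_(p : {ffun 'I_l.+1 -> 'I_W} | good_path p)
     linprod_coef (fun k => sml_label B k (p (src_of k)) (p (tgt_of k))) e.

(* evaluation at a point h of a commutative polynomial all of whose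
   monomials have every exponent <= d *)
Definition cpoly_eval (F : comRingType) (V : finType) (d : nat)
    (c : (V -> nat) -> F) (h : V -> F) : F :=
  \sum_(e : {ffun V -> 'I_d.+1}) c (fun v => nat_of_ord (e v)) * \prod_(v : V) h v ^+ e v.

(* Main.v *)
Require Import Defs.
From HB Require Import structures.
From mathcomp Require Import all_boot all_order all_algebra.
Import GRing.Theory.
Local Open Scope ring_scope.
Set Implicit Arguments. Unset Strict Implicit. Unset Printing Implicit Defensive.

Definition Cm (F : comRingType) (R n : nat) (l : 'I_R -> 'I_R -> F * ('I_n -> F)) : 'M[F]_R :=
  \matrix_(u, v) (l u v).1.
Definition Am (F : comRingType) (R n : nat) (l : 'I_R -> 'I_R -> F * ('I_n -> F)) (i : 'I_n) : 'M[F]_R :=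
  \matrix_(u, v) (l u v).2 i.

Fixpoint MC (F : comRingType) (R n : nat) (lab : nat -> 'I_R -> 'I_R -> F * ('I_n -> F))
  (ks : seq nat) (w : seq 'I_n) : 'M[F]_R :=
  match ks with
  | [::] => if w is [::] then 1%:M else 0
  | k :: ks' => Cm (lab k) *m MC lab ks' w +
                (if w is i :: w' then Am (lab k) i *m MC lab ks' w' else 0)
  end.

Definition fcons (T : Type) (L : nat) (c : T) (q : {ffun 'I_L.+1 -> T}) : {ffun 'I_L.+2 -> T} :=
  [ffun k => if unlift ord0 k is Some k' then q k' else c].

Lemma sum_ffunS (F : comRingType) (T : finType) (L : nat) (G : {ffun 'I_L.+2 -> T} -> F) :
  \sum_p G p = \sum_c \sum_q G (fcons c q).
Proof.
rewrite pair_big /=.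
rewrite (reindex (fun cq : T * {ffun 'I_L.+1 -> T} => fcons cq.1 cq.2)) //=.
apply: onW_bij; exists (fun p : {ffun 'I_L.+2 -> T} => (p ord0, [ffun k : 'I_L.+1 => p (lift ord0 k)])).
- move=> [c q] /=; rewrite /fcons ffunE unlift_none; congr (_, _).
  by apply/ffunP => k; rewrite !ffunE liftK.
- move=> p; apply/ffunP => k; rewrite /fcons !ffunE.
  by case: unliftP => [j ->|->]; rewrite ?ffunE.
Qed.

Lemma sum_ffun0 (F : comRingType) (T : finType) (G : {ffun 'I_1 -> T} -> F) :
  \sum_p G p = \sum_c G [ffun=> c].
Proof.
rewrite (reindex (fun c : T => [ffun=> c])) //=.
apply: onW_bij; exists (fun p : {ffun 'I_1 -> T} => p ord0).
- by move=> c; rewrite ffunE.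
- move=> p; apply/ffunP => k; rewrite ffunE; congr (p _); apply/val_inj; by case: k => [[]].
Qed.

Lemma fcons0 (T : Type) (L : nat) (c : T) (q : {ffun 'I_L.+1 -> T}) : fcons c q ord0 = c.
Proof. by rewrite /fcons ffunE unlift_none. Qed.
Lemma fconsS (T : Type) (L : nat) (c : T) (q : {ffun 'I_L.+1 -> T}) k : fcons c q (lift ord0 k) = q k.
Proof. by rewrite /fcons ffunE liftK. Qed.
Lemma ord_maxS (L : nat) : (ord_max : 'I_L.+2) = lift ord0 (ord_max : 'I_L.+1).
Proof. exact: val_inj. Qed.
Lemma src0 (L : nat) : src_of (ord0 : 'I_L.+1) = ord0.
Proof. exact: val_inj. Qed.
Lemma tgt0 (L : nat) : tgt_of (ord0 : 'I_L.+1) = lift ord0 ord0.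
Proof. exact: val_inj. Qed.
Lemma srcS (L : nat) (k : 'I_L) : src_of (lift ord0 k) = lift ord0 (src_of k).
Proof. exact: val_inj. Qed.
Lemma tgtS (L : nat) (k : 'I_L) : tgt_of (lift ord0 k) = lift ord0 (tgt_of k).
Proof. exact: val_inj. Qed.

Lemma sum_split0 (F : comRingType) (T : finType) (L : nat) (P : pred {ffun 'I_L.+1 -> T})
   (G : {ffun 'I_L.+1 -> T} -> F) :
  \sum_(q | P q) G q = \sum_(d : T) \sum_(q : {ffun 'I_L.+1 -> T} | (q ord0 == d) && P q) G q.
Proof.
rewrite (partition_big (fun q : {ffun 'I_L.+1 -> T} => q ord0) predT) //.
by apply: eq_bigr => d _; apply: eq_bigl => q; rewrite andbC.
Qed.

Lemma PLN (F : comRingType) (R n : nat) (lab : nat -> 'I_R -> 'I_R -> F * ('I_n -> F))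
  (L o : nat) (a b : 'I_R) (w : seq 'I_n) :
  \sum_(p : {ffun 'I_L.+1 -> 'I_R} | (p ord0 == a) && (p ord_max == b))
     ncprod_coef [seq lab (o + val k)%N (p (src_of k)) (p (tgt_of k)) | k <- enum 'I_L] w
  = MC lab (iota o L) w a b.
Proof.
elim: L o a b w => [|L IH] o a b w.
  rewrite big_mkcond sum_ffun0 enum_ord0 /=.
  under eq_bigr => c _ do rewrite !ffunE.
  case: w => [|i w] /=; last by rewrite big1 ?mxE // => c _; case: ifP.
  rewrite mxE (bigD1 a) //= eqxx big1 ?addr0.
    by case: eqP.
  by move=> c /negbTE ->.
rewrite big_mkcond sum_ffunS enum_ordSl.
rewrite (bigD1 a) // [X in _ + X = _]big1 ?addr0; last first.
  move=> c /negbTE ca; apply: big1 => q _; by rewrite fcons0 ca.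
have E : forall q : {ffun 'I_L.+1 -> 'I_R},
  [seq lab (o + val k)%N (fcons a q (src_of k)) (fcons a q (tgt_of k)) | k <- [seq lift ord0 i | i <- enum 'I_L]]
  = [seq lab (o.+1 + val k)%N (q (src_of k)) (q (tgt_of k)) | k <- enum 'I_L].
  by move=> q; rewrite -map_comp; apply: eq_map => k /=; rewrite srcS tgtS !fconsS addSnnS.
rewrite /=.
under eq_bigr => q _ do rewrite E fcons0 eqxx /= ord_maxS fconsS src0 tgt0 fcons0 fconsS addn0.
rewrite -big_mkcond /= sum_split0 mxE.
case: w => [|i w] /=.
  rewrite [X in _ + X]mxE !addr0 mxE; apply: eq_bigr => d _.
  rewrite mxE -IH mulr_sumr; apply: eq_bigr => q /andP[/eqP -> _].
  by rewrite addr0.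
rewrite !mxE -big_split /=; apply: eq_bigr => d _.
rewrite !mxE -!IH !mulr_sumr -big_split /=; apply: eq_bigr => q /andP[/eqP -> _]; by [].
Qed.

Lemma MC_cons (F : comRingType) (R n : nat) (lab : nat -> 'I_R -> 'I_R -> F * ('I_n -> F))
  (ks : seq nat) (i : 'I_n) (w : seq 'I_n) :
  MC lab ks (i :: w) = \sum_(m < size ks)
     MC lab (take m ks) [::] *m Am (lab (nth 0%N ks m)) i *m MC lab (drop m.+1 ks) w.
Proof.
elim: ks => [|k ks IH] /=; first by rewrite big_ord0.
rewrite big_ord_recl /= IH mulmx_sumr mul1mx addrC drop0; congr (_ + _).
apply: eq_bigr => m _; by rewrite addr0 !mulmxA.
Qed.

Lemma ncprod_nil (F : comRingType) (n : nat) (ls : seq (F * ('I_n -> F))) :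
  ncprod_coef ls [::] = \prod_(x <- ls) x.1.
Proof. elim: ls => [|x ls IH] /=; by rewrite ?big_nil ?big_cons ?addr0 ?IH. Qed.

Lemma ncprod_big (F : comRingType) (n : nat) (ls : seq (F * ('I_n -> F))) (w : seq 'I_n) :
  (size ls < size w)%N -> ncprod_coef ls w = 0.
Proof.
elim: ls w => [|x ls IH] [|i w] //= h.
rewrite !IH ?mulr0 ?addr0 //; exact: ltnW.
Qed.

Lemma cpoly_linprod (F : comRingType) (V : finType) (l : nat) (ls : 'I_l -> V -> F) (h : V -> F) :
  cpoly_eval l (linprod_coef ls) h = \prod_(k < l) \sum_v ls k v * h v.
Proof.
rewrite bigA_distr_bigA /cpoly_eval /linprod_coef.
under eq_bigr => e _ do rewrite mulr_suml big_mkcond.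
rewrite exchange_big /=; apply: eq_bigr => t _.
pose et := [ffun v => (inord #|[pred k | t k == v]| : 'I_l.+1)].
have cntle : forall v, (#|[pred k | t k == v]| <= l)%N.
  by move=> v; rewrite -[X in (_ <= X)%N]card_ord max_card.
rewrite -big_mkcond (big_pred1 et) /=; last first.
  move=> e; apply/forallP/eqP => [H|->] /=.
    apply/ffunP => v; apply/val_inj; rewrite /et ffunE.
    by rewrite /= inordK ?ltnS //; exact/eqP/H.
  by move=> v; rewrite /et ffunE /= inordK ?ltnS.
rewrite big_split /=; congr (_ * _).
under eq_bigr => v _ do rewrite /et ffunE /= inordK ?ltnS //.
rewrite (partition_big (fun k => t k) predT) //=; apply: eq_bigr => v _.
rewrite -prodr_const; apply: eq_big => [k|k /eqP ->] //=.
Qed.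

Lemma linprod_sml (F : comRingType) (n D l : nat) (ls : 'I_l -> 'I_n * 'I_D -> F)
  (t0 : {ffun 'I_l -> 'I_n * 'I_D}) :
  (forall k v, val v.2 != val k -> ls k v = 0) -> (forall k, val (t0 k).2 = val k) ->
  linprod_coef ls (fun v => #|[pred k | t0 k == v]|) = \prod_k ls k (t0 k).
Proof.
move=> supp ht0; rewrite /linprod_coef (bigD1 t0) /=; last by apply/forallP.
rewrite [X in _ + X]big1 ?addr0 // => t /andP[/forallP cnt tne].
case: (boolP [forall k, val (t k).2 == val k]) => [/forallP all|].
  exfalso; move/eqP: tne; apply; apply/ffunP => k.
  have := cnt (t0 k).
  have : (0 < #|[pred k' | t0 k' == t0 k]|)%N by apply/card_gt0P; exists k; rewrite inE.
  move=> pos /eqP eqc; rewrite eqc in pos.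
  case/card_gt0P: pos => k' /[!inE] /eqP tk'.
  have kk : k' = k by apply/val_inj; rewrite -(eqP (all k')) tk' ht0.
  by rewrite -kk tk' kk.
case/forallPn => k hk; rewrite (bigD1 k) //= supp ?mul0r //.
Qed.

Definition hx (F : comRingType) (n D : nat) (h : 'I_n * 'I_D -> F) (i : 'I_n) (m : nat) : F :=
  if @insub _ (fun x : nat => (x < D)%N) 'I_D m is Some j then h (i, j) else 0.

Lemma XmatE (F : comRingType) (n D : nat) (h : 'I_n * 'I_D -> F) (i : 'I_n) (c b : 'I_D.+1) :
  Xmat h i c b = (val b == (val c).+1)%:R * hx h i c.
Proof.
rewrite /Xmat /hx mxE; case: insub => [j|]; case: eqP => _; by rewrite ?mul1r ?mul0r.
Qed.

Lemma sum_ind (F : comRingType) (N m : nat) (G : nat -> F) :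
  \sum_(c < N) (val c == m)%:R * G (val c) = (m < N)%:R * G m.
Proof.
case: (ltnP m N) => hm.
  rewrite (bigD1 (Ordinal hm)) //= eqxx mul1r big1 ?addr0 ?mul1r // => c hc.
  case: eqP => [e|]; last by rewrite mul0r.
  by move: hc; rewrite -val_eqE /= e eqxx.
rewrite big1 ?mul0r // => c _; case: eqP => [e|]; last by rewrite mul0r.
have : (m < N)%N by rewrite -e ltn_ord.
by rewrite ltnNge hm.
Qed.

Lemma XP (F : comRingType) (n D : nat) (h : 'I_n * 'I_D -> F) (k : nat) (g : 'I_k -> 'I_n)
  (a b : 'I_D.+1) :
  (\prod_(j < k) Xmat h (g j)) a b = (val b == (val a + k)%N)%:R * \prod_(j < k) hx h (g j) (val a + j)%N.
Proof.
elim: k g b => [|k IH] g b.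
  rewrite !big_ord0 mxE.
  by rewrite addn0 mulr1 eq_sym.
rewrite big_ord_recr /= mxE.
have IH' := IH (fun i => g (widen_ord (leqnSn k) i)); rewrite /= in IH'.
set Q := \prod_(i < k) hx h (g (widen_ord (leqnSn k) i)) (a + i)%N.
transitivity (\sum_(c < D.+1) (val c == (val a + k)%N)%:R * (Q * ((val b == (val c).+1)%:R * hx h (g ord_max) c))).
  apply: eq_bigr => c _; rewrite XmatE mulrA; congr (_ * _); exact: IH'.
rewrite (@sum_ind _ D.+1 (val a + k)%N (fun c => Q * ((val b == c.+1)%:R * hx h (g ord_max) c))) big_ord_recr /=.
rewrite addnS; case: (ltnP (val a + k) D.+1) => hlt.
  by rewrite mul1r mulrCA.
have hb : (val b == (val a + k).+1) = false.
  apply/negbTE; rewrite neq_ltn; apply/orP; left; exact: (leq_trans (ltn_ord b) (leqW hlt)).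
by rewrite hb !mul0r.
Qed.

Lemma EV (F : comRingType) (n D : nat) (h : 'I_n * 'I_D -> F) (f : seq 'I_n -> F) (l : nat)
  (hl : (l < D.+1)%N) :
  nc_eval D f (fun i => Xmat h i) ord0 (Ordinal hl) =
  \sum_(t : l.-tuple 'I_n) f t * \prod_(j < l) hx h (tnth t j) j.
Proof.
rewrite /nc_eval; erewrite summxE; rewrite (bigD1 (Ordinal hl)) //= [X in _ + X]big1 ?addr0.
  erewrite summxE; apply: eq_bigr => t _; rewrite mxE XP /= add0n eqxx mul1r.
  by under eq_bigr => j _ do rewrite add0n.
move=> k hk; erewrite summxE; rewrite big1 // => t _; rewrite mxE XP /= add0n.
have -> : (l == k) = false by apply/negbTE; apply: contra hk => /eqP e; apply/eqP/val_inj.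
by rewrite mul0r mulr0.
Qed.

From mathcomp Require Import zify.

Definition labn (F : comRingType) (n D r : nat) (P : ncABP F n D r) (k : nat)
  : 'I_r -> 'I_r -> F * ('I_n -> F) :=
  if @insub _ (fun x : nat => (x < D)%N) 'I_D k is Some k' then nc_label P k'
  else fun _ _ => (0, fun _ => 0).

Lemma labnE (F : comRingType) (n D r : nat) (P : ncABP F n D r) (k : 'I_D) :
  labn P k = nc_label P k.
Proof. by rewrite /labn valK. Qed.

Definition Gm (F : comRingType) (n D r : nat) (P : ncABP F n D r) (s : nat) (w : seq 'I_n) : 'M[F]_r :=
  MC (labn P) (iota s (D - s)) w.

Definition Pre (F : comRingType) (n D r : nat) (P : ncABP F n D r) (s t : nat) (i : 'I_n) : 'M[F]_r :=
  MC (labn P) (iota s (t - s).-1) [::] *m Am (labn P t.-1) i.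

Lemma Gm_cons (F : comRingType) (n D r : nat) (P : ncABP F n D r) (s : nat) (i : 'I_n) (w : seq 'I_n) :
  (s <= D)%N ->
  Gm P s (i :: w) = \sum_(s.+1 <= t < D.+1) Pre P s t i *m Gm P t w.
Proof.
move=> hs; rewrite /Gm MC_cons size_iota.
rewrite -{1}[s.+1]add0n big_addn subSS big_mkord.
apply: eq_bigr => m _; have hm := ltn_ord m.
rewrite /Pre take_iota drop_iota nth_iota //.
have -> : minn m (D - s) = m by apply/minn_idPl; exact: ltnW.
have e1 : (m + s.+1 - s).-1 = m by lia.
have e2 : (m + s.+1).-1 = (s + m)%N by lia.
have e3 : (s + m.+1)%N = (m + s.+1)%N by lia.
have e4 : (D - s - m.+1)%N = (D - (m + s.+1))%N by lia.
by rewrite e1 e2 e3 e4.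
Qed.

Lemma decu_proof (r D : nat) (x : 'I_(r * D.+1)) : (x %/ D.+1 < r)%N.
Proof. by rewrite ltn_divLR. Qed.
Definition decu (r D : nat) (x : 'I_(r * D.+1)) : 'I_r := Ordinal (decu_proof x).
Definition decs (r D : nat) (x : 'I_(r * D.+1)) : 'I_D.+1 := Ordinal (ltn_pmod x (ltn0Sn D)).

Lemma enc_proof (r D : nat) (p : 'I_r * 'I_D.+1) : (p.1 * D.+1 + p.2 < r * D.+1)%N.
Proof.
case: p => [[u hu] [s hs]] /=.
apply: (@leq_trans (u * D.+1 + D.+1)); first by rewrite ltn_add2l.
by rewrite -mulSnr leq_mul2r hu orbT.
Qed.
Definition enc (r D : nat) (p : 'I_r * 'I_D.+1) : 'I_(r * D.+1) := Ordinal (enc_proof p).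

Lemma decu_enc (r D : nat) (p : 'I_r * 'I_D.+1) : decu (enc p) = p.1.
Proof. apply: val_inj => /=; by rewrite divnMDl // divn_small // addn0. Qed.
Lemma decs_enc (r D : nat) (p : 'I_r * 'I_D.+1) : decs (enc p) = p.2.
Proof. apply: val_inj => /=; by rewrite modnMDl modn_small. Qed.

Lemma sum_dec (F : comRingType) (r D : nat) (G : 'I_r -> 'I_D.+1 -> F) :
  \sum_(x : 'I_(r * D.+1)) G (decu x) (decs x) = \sum_u \sum_s G u s.
Proof.
rewrite pair_big /= (reindex (@enc r D)) /=.
  by apply: eq_bigr => p _; rewrite decu_enc decs_enc.
apply: onW_bij; exists (fun x => (decu x, decs x)).
  by move=> p; rewrite decu_enc decs_enc; case: p.
move=> x; apply: val_inj => /=; by rewrite -divn_eq.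
Qed.

Lemma sum_cut (F : comRingType) (N s0 : nat) (K : nat -> F) : (s0 < N)%N ->
  \sum_(t < N) (if (s0 < t)%N then K t else 0) = \sum_(s0.+1 <= t < N) K t.
Proof.
move=> hs; rewrite -(big_mkord xpredT (fun t => if (s0 < t)%N then K t else 0)).
rewrite (@big_cat_nat _ _ _ s0.+1) //= big_nat_cond big1 ?add0r.
  by apply: eq_big_nat => t /andP[ht _]; rewrite ht.
by move=> t /andP[/andP[_ ht] _]; rewrite ltnNge -ltnS ht.
Qed.

Definition Mmid (F : comRingType) (n D r : nat) (P : ncABP F n D r) (i : 'I_n)
  (x y : 'I_(r * D.+1)) : F :=
  if (decs x < decs y)%N then Pre P (decs x) (decs y) i (decu x) (decu y) else 0.
Definition Mlast (F : comRingType) (n D r : nat) (P : ncABP F n D r) (a0 : 'I_r) (i : 'I_n)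
  (x y : 'I_(r * D.+1)) : F :=
  if val y == 0%N then Gm P (decs x) [:: i] (decu x) a0 else 0.
Definition Lay (F : comRingType) (n D r : nat) (P : ncABP F n D r) (a0 : 'I_r) (l j : nat)
  (i : 'I_n) (x y : 'I_(r * D.+1)) : F :=
  if j == l.-1 then Mlast P a0 i x y else Mmid P i x y.
Definition labB (F : comRingType) (n D r : nat) (P : ncABP F n D r) (a0 : 'I_r) (l : nat)
  (ww : seq 'I_n) (i0 : 'I_n) (j : nat) (x y : 'I_(r * D.+1)) : F * ('I_n -> F) :=
  (Lay P a0 l j (nth i0 ww j) x y, fun _ => 0).

Lemma summxF (F : comRingType) (m : nat) (I : Type) (s : seq I) (P : pred I) (G : I -> 'M[F]_m) i j :
  (\sum_(k <- s | P k) G k) i j = \sum_(k <- s | P k) G k i j.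
Proof. exact: summxE. Qed.

Lemma iotaS (s m : nat) : iota s m.+1 = s :: iota s.+1 m.
Proof. by []. Qed.
Lemma MC_nil (F : comRingType) (R n : nat) (lab : nat -> 'I_R -> 'I_R -> F * ('I_n -> F)) k ks :
  MC lab (k :: ks) [::] = Cm (lab k) *m MC lab ks [::].
Proof. by rewrite /= addr0. Qed.

Lemma Vclaim (F : comRingType) (n D r : nat) (P : ncABP F n D r) (a0 : 'I_r) (l : nat)
  (ww : seq 'I_n) (i0 : 'I_n) (b0 : 'I_(r * D.+1)) :
  size ww = l -> val b0 = 0%N ->
  forall m, (m < l)%N -> forall x,
  MC (labB P a0 l ww i0) (iota (l - m.+1) m.+1) [::] x b0 =
  Gm P (decs x) (drop (l - m.+1) ww) (decu x) a0.
Proof.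
move=> hsz hb0; elim=> [|m IH] hm x.
  rewrite /= mulmx1 addr0 mxE /labB /= /Lay subn1 eqxx /Mlast hb0 eqxx.
  by rewrite (drop_nth i0) ?hsz ?prednK // ?ltn_predL // drop_oversize ?hsz ?prednK.
have e : (l - m.+2).+1 = (l - m.+1)%N by lia.
rewrite iotaS MC_nil e mxE (drop_nth i0) ?hsz; last lia.
rewrite e.
under eq_bigr => z _ do rewrite (IH (ltnW hm)) mxE /labB /Lay.
have -> : ((l - m.+2)%N == l.-1) = false by apply/eqP; lia.
set i := nth i0 ww (l - m.+2)%N; set w' := drop (l - m.+1)%N ww.
rewrite /= /Mmid.
rewrite (@sum_dec _ r D (fun u s => (if (decs x < s)%N then Pre P (decs x) s i (decu x) u else 0) * Gm P s w' u a0)).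
change (x %% D.+1)%N with (val (decs x)).
rewrite exchange_big Gm_cons; last by rewrite -ltnS ltn_ord.
rewrite summxF.
rewrite -(@sum_cut _ D.+1 (decs x) (fun t => (Pre P (decs x) t i *m Gm P t w') (decu x) a0)) //.
apply: eq_bigr => s _; case: ifP => _; last by rewrite big1 // => u _; rewrite mul0r.
by rewrite mxE.
Qed.

Lemma good_pathE (L W : nat) (p : {ffun 'I_L.+1 -> 'I_W}) (b : 'I_W) : val b = 0%N ->
  good_path p = (p ord0 == b) && (p ord_max == b).
Proof. by move=> hb; rewrite /good_path -!val_eqE hb. Qed.

Lemma KEY (F : comRingType) (n D r : nat) (P : ncABP F n D r) (a0 : 'I_r) (ha0 : val a0 = 0%N)
  (l : nat) (ww : seq 'I_n) (i0 : 'I_n) :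
  size ww = l -> (0 < l)%N -> (l <= D)%N ->
  \sum_(p : {ffun 'I_l.+1 -> 'I_(r * D.+1)} | good_path p)
     \prod_(k < l) Lay P a0 l k (nth i0 ww k) (p (src_of k)) (p (tgt_of k)) = nc_coef P ww.
Proof.
move=> hsz hl hlD.
have hW : (0 < r * D.+1)%N by rewrite muln_gt0 andbT; exact: (leq_ltn_trans (leq0n _) (ltn_ord a0)).
pose b0 := Ordinal hW.
have hb0 : val b0 = 0%N by [].
under eq_bigl => p do rewrite (good_pathE p hb0).
transitivity (\sum_(p : {ffun 'I_l.+1 -> 'I_(r * D.+1)} | (p ord0 == b0) && (p ord_max == b0))
   ncprod_coef [seq labB P a0 l ww i0 (0 + val k)%N (p (src_of k)) (p (tgt_of k)) | k <- enum 'I_l] [::]).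
  apply: eq_bigr => p _; rewrite ncprod_nil big_map.
  rewrite enumT; apply: eq_bigr => k _; by rewrite /labB add0n.
have V := @Vclaim F n D r P a0 l ww i0 b0 hsz hb0 l.-1 (ltac:(by rewrite ltn_predL)) b0.
rewrite prednK // subnn in V.
rewrite PLN V drop0.
have -> : nat_of_ord (decs b0) = 0%N by rewrite /= mod0n.
have -> : decu b0 = a0 by apply: val_inj; rewrite /= div0n ha0.
rewrite /nc_coef /Gm subn0.
under eq_bigl => p do rewrite (good_pathE p ha0).
rewrite -PLN; apply: eq_bigr => p _; congr ncprod_coef.
by apply: eq_map => k; rewrite add0n labnE.
Qed.

Definition Bsml (F : comRingType) (n D r : nat) (P : ncABP F n D r) (a0 : 'I_r) (l : nat)
  : smlABP F n D l (r * D.+1) :=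
  SmlABP (fun (k : 'I_l) (x y : 'I_(r * D.+1)) (v : 'I_n * 'I_D) =>
            if val v.2 == val k then Lay P a0 l k v.1 x y else 0).

Lemma Bsml_setml (F : comRingType) (n D r : nat) (P : ncABP F n D r) (a0 : 'I_r) (l : nat) :
  is_setml (Bsml P a0 l).
Proof. by move=> k u v x hx; rewrite /= (negbTE hx). Qed.

Lemma sum_pairK (F : comRingType) (n D k : nat) (hk : (k < D)%N) (G : 'I_n -> F) (h : 'I_n * 'I_D -> F) :
  \sum_(v : 'I_n * 'I_D) (if val v.2 == k then G v.1 else 0) * h v = \sum_i G i * h (i, Ordinal hk).
Proof.
transitivity (\sum_i \sum_(j : 'I_D) (if val j == k then G i else 0) * h (i, j)).
  by rewrite pair_big; apply: eq_bigr => [[i j]] _.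
apply: eq_bigr => i _; rewrite (bigD1 (Ordinal hk)) //= eqxx big1 ?addr0 // => j hj.
rewrite ifN ?mul0r //; apply: contra hj => /eqP e; apply/eqP/val_inj; exact: e.
Qed.

Lemma hxW (F : comRingType) (n D l : nat) (hlD : (l <= D)%N) (h : 'I_n * 'I_D -> F) (i : 'I_n) (k : 'I_l) :
  hx h i (val k) = h (i, widen_ord hlD k).
Proof.
have hk : (val k < D)%N by exact: (leq_trans (ltn_ord k)).
rewrite /hx insubT /=; congr h; congr pair; exact: val_inj.
Qed.

Lemma EVB (F : comRingType) (n D r : nat) (P : ncABP F n D r) (a0 : 'I_r) (ha0 : val a0 = 0%N)
  (i0 : 'I_n) (l : nat) (hl : (0 < l)%N) (hlD : (l <= D)%N) (h : 'I_n * 'I_D -> F) :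
  cpoly_eval l (sml_coef (Bsml P a0 l)) h =
  \sum_(t : {ffun 'I_l -> 'I_n}) (\prod_(k < l) h (t k, widen_ord hlD k)) * nc_coef P [seq t k | k <- enum 'I_l].
Proof.
rewrite /cpoly_eval /sml_coef.
under eq_bigr => e _ do rewrite mulr_suml.
rewrite exchange_big /=.
transitivity (\sum_(p : {ffun 'I_l.+1 -> 'I_(r * D.+1)} | good_path p)
  \prod_(k < l) \sum_i Lay P a0 l k i (p (src_of k)) (p (tgt_of k)) * h (i, widen_ord hlD k)).
  apply: eq_bigr => p _.
  transitivity (cpoly_eval l (linprod_coef (fun k v => sml_label (Bsml P a0 l) k (p (src_of k)) (p (tgt_of k)) v)) h); first by [].
  rewrite cpoly_linprod; apply: eq_bigr => k _.
  have hk : (val k < D)%N by exact: (leq_trans (ltn_ord k)).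
  rewrite (@sum_pairK _ n D k hk (fun i => Lay P a0 l k i (p (src_of k)) (p (tgt_of k))) h).
  apply: eq_bigr => i _; congr (_ * h (_, _)); exact: val_inj.
transitivity (\sum_(p : {ffun 'I_l.+1 -> 'I_(r * D.+1)} | good_path p) \sum_(t : {ffun 'I_l -> 'I_n})
   \prod_(k < l) (Lay P a0 l k (t k) (p (src_of k)) (p (tgt_of k)) * h (t k, widen_ord hlD k))).
  apply: eq_bigr => p _; exact: bigA_distr_bigA.
rewrite exchange_big /=; apply: eq_bigr => t _.
under eq_bigr => p _ do rewrite big_split /=.
rewrite -mulr_suml mulrC; congr (_ * _).
rewrite -(@KEY F n D r P a0 ha0 l [seq t k | k <- enum 'I_l] i0) //; last first.
  by rewrite size_map size_enum_ord.
apply: eq_bigr => p _; apply: eq_bigr => k _.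
by rewrite (nth_map k) ?size_enum_ord // nth_ord_enum.
Qed.

Lemma sum_tuple_ffun (F : comRingType) (T : finType) (l : nat) (G : l.-tuple T -> F) :
  \sum_(tt : l.-tuple T) G tt = \sum_(t : {ffun 'I_l -> T}) G [tuple t i | i < l].
Proof.
rewrite (reindex (fun t : {ffun 'I_l -> T} => [tuple t i | i < l])) //=.
apply: onW_bij; exists (fun tt : l.-tuple T => [ffun i => tnth tt i]).
  by move=> t; apply/ffunP => i; rewrite ffunE tnth_mktuple.
by move=> tt; apply: eq_from_tnth => i; rewrite tnth_mktuple ffunE.
Qed.

Lemma val_mktuple (T : Type) (l : nat) (t : 'I_l -> T) :
  val [tuple t i | i < l] = [seq t k | k <- enum 'I_l].
Proof. by []. Qed.

Theorem theorem4p5 (F : fieldType) (D n r : nat)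
  (hD : (0 < D)%N) (hn : (0 < n)%N) (hr : (0 < r)%N)
  (H : ('I_n * 'I_D -> F) -> Prop)
  (Hne : exists h, H h)
  (Hhit : forall l : nat, (0 < l)%N -> (l <= D)%N ->
     forall B : smlABP F n D l (r * D.+1), is_setml B ->
       ((forall e, sml_coef B e = 0) <->
        (forall h, H h -> cpoly_eval l (sml_coef B) h = 0)))
  (P : ncABP F n D r) :
  (forall w : seq 'I_n, nc_coef P w = 0) <->
  (forall h, H h -> nc_eval D (nc_coef P) (fun i => Xmat h i) = 0).
Proof.
split.
  move=> H0 h _; rewrite /nc_eval big1 // => k _; rewrite big1 // => t _.
  by rewrite H0 scale0r.
move=> Hev w.
case: (ltnP D (size w)) => hDl.
  rewrite /nc_coef big1 // => p _; apply: ncprod_big; by rewrite size_map size_enum_ord.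
case: (posnP (size w)) => hl0.
  move/size0nil: hl0 => ->.
  case: Hne => h0 Hh0.
  have := Hev h0 Hh0; move/matrixP/(_ ord0 ord0).
  rewrite (EV h0 (nc_coef P) (ltn0Sn D)) (big_pred1 [tuple]); last by move=> t /=; apply/esym/eqP; exact: tuple0.
  by rewrite big_ord0 mulr1 mxE.
set l := size w.
pose a0 : 'I_r := Ordinal hr.
have ha0 : val a0 = 0%N by [].
pose i0 : 'I_n := Ordinal hn.
have Hz : forall h, H h -> cpoly_eval l (sml_coef (Bsml P a0 l)) h = 0.
  move=> h Hh; rewrite (EVB P ha0 i0 hl0 hDl h).
  have hlt : (l < D.+1)%N by rewrite ltnS.
  have := Hev h Hh; move/matrixP/(_ ord0 (Ordinal hlt)).
  rewrite (EV h (nc_coef P) hlt) sum_tuple_ffun mxE => E0.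
  apply: (eq_trans _ E0).
  apply: eq_bigr => t _; rewrite mulrC val_mktuple; congr (_ * _).
  by apply: eq_bigr => k _; rewrite tnth_mktuple (hxW hDl).
have Hall := (Hhit l hl0 hDl _ (@Bsml_setml _ n D r P a0 l)).2 Hz.
pose t0 : {ffun 'I_l -> 'I_n * 'I_D} := [ffun k : 'I_l => (nth i0 w k, widen_ord hDl k)].
have E : sml_coef (Bsml P a0 l) (fun v => #|[pred k | t0 k == v]|) = nc_coef P w.
  rewrite /sml_coef -(@KEY _ n D r P a0 ha0 l w i0) //.
  apply: eq_bigr => p _; rewrite linprod_sml.
  - by apply: eq_bigr => k _; rewrite /= ffunE /= eqxx.
  - by move=> k v hv; rewrite /= (negbTE hv).
  - by move=> k; rewrite ffunE.
by rewrite -E Hall.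
Qed.
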